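(* Let $X$ be a separable real Banach space and let $(\Omega,\beta,\mu)$ be a complete probability measure space. Let $T:\Omega\times X\to X$ be a continuous random mapping such that there are real-valued random variables $\alpha_4,\alpha_5:\Omega\to[0,\infty)$ with $\alpha_4(\omega)+\alpha_5(\omega)<1$ for all $\omega\in\Omega$ and, for every $\omega\in\Omega$ and all $X$-valued random variables $x_1,x_2:\Omega\to X$, $$\|T(\omega,x_1(\omega))-T(\omega,x_2(\omega))\|\le \alpha_4(\omega)\|x_1(\omega)-T(\omega,x_2(\omega))\|+\alpha_5(\omega)\|x_2(\omega)-T(\omega,x_1(\omega))\|.$$ Then $T$ has a random fixed point, and it is unique (any two random fixed points of $T$ coincide almost surely).
   Context: An $X$-valued random variable is a map $x:\Omega\to X$ such that $x^{-1}(B)\in\beta$ for every Borel set $B\subseteq X$. A random mapping is a map $T:\Omega\times X\to X$ such that $\omega\mapsto T(\omega,x)$ is an $X$-valued random variable for every fixed $x\in X$. A random mapping $T$ is continuous if the set of $\omega\in\Omega$ for which $x\mapsto T(\omega,x)$ is continuous has $\mu$-measure one. A random fixed point of $T$ is an $X$-valued random variable $x$ with $\mu\{\omega\in\Omega: T(\omega,x(\omega))=x(\omega)\}=1$. *)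

(* Defs.v *)
From HB Require Import structures.
From mathcomp Require Import all_boot all_order all_algebra.
From mathcomp Require Import all_classical all_reals all_analysis.
Set Implicit Arguments. Unset Strict Implicit. Unset Printing Implicit Defensive.
Import Order.TTheory GRing.Theory Num.Theory.
Import numFieldNormedType.Exports.
Local Open Scope classical_set_scope.
Local Open Scope ring_scope.

Definition borel_set (X : topologicalType) (B : set X) : Prop := <<s open >> B.

Definition separable_space (X : topologicalType) : Prop :=
  exists D : set X, countable D /\ dense D.

Definition X_random_variable d (Omega : measurableType d) (X : topologicalType)
  (x : Omega -> X) : Prop :=
  forall B : set X, borel_set B -> measurable (x @^-1` B).

Definition random_mapping d (Omega : measurableType d) (X : topologicalType)
  (T : Omega -> X -> X) : Prop :=
  forall x : X, X_random_variable (fun w => T w x).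

Definition measure_one d (Omega : measurableType d) (R : realType)
  (mu : set Omega -> \bar R) (P : Omega -> Prop) : Prop :=
  measurable [set w | P w] /\ mu [set w | P w] = 1%E.

Definition continuous_random_mapping d (Omega : measurableType d) (R : realType)
  (mu : set Omega -> \bar R) (X : topologicalType) (T : Omega -> X -> X) : Prop :=
  random_mapping T /\ measure_one mu (fun w => continuous (T w)).

Definition random_fixed_point d (Omega : measurableType d) (R : realType)
  (mu : set Omega -> \bar R) (X : topologicalType) (T : Omega -> X -> X)
  (x : Omega -> X) : Prop :=
  X_random_variable x /\ measure_one mu (fun w => T w (x w) = x w).

(* Main.v *)
Require Import Defs.
From HB Require Import structures.
From mathcomp Require Import all_boot all_order all_algebra.
From mathcomp Require Import all_classical all_reals all_analysis.
From mathcomp Require Import lra.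
Set Implicit Arguments. Unset Strict Implicit. Unset Printing Implicit Defensive.
Import Order.TTheory GRing.Theory Num.Theory.
Import numFieldNormedType.Exports.
Local Open Scope classical_set_scope.
Local Open Scope ring_scope.

Lemma det_est (R : realType) (X : completeNormedModType R) (f : X -> X) (a4 a5 : R) (ha4 : 0 <= a4) (ha5 : 0 <= a5) (hs : a4 + a5 < 1) (Hf : forall a b, `|f a - f b| <= a4 * `|a - f b| + a5 * `|b - f a|) (p : X) : f p = p -> forall b,
  (1 - a4 - a5) * `|b - p| <= (1 - a4) * `|b - f b|.
Proof.
move=> fp b; have h1 := Hf p b; rewrite fp in h1.
have h2 := ler_distD (f b) b p.
rewrite (distrC (f b) p) in h2.
have u0 : 0 <= `|b - p| by [].
have v0 : 0 <= `|b - f b| by [].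
have w0 : 0 <= `|p - f b| by [].
have h3 : (1 - a4) * `|b - p| <= (1 - a4) * (`|b - f b| + `|p - f b|).
  have a4' : 0 <= 1 - a4 by lra.
  apply: ler_wpM2l; [exact: a4'|exact: h2].
lra.
Qed.

Lemma det_est2 (R : realType) (X : completeNormedModType R) (f : X -> X) (a4 a5 : R) (ha4 : 0 <= a4) (ha5 : 0 <= a5) (hs : a4 + a5 < 1) (Hf : forall a b, `|f a - f b| <= a4 * `|a - f b| + a5 * `|b - f a|) (p : X) : f p = p -> forall b,
  (1 - a4) * `|b - f b| <= 2 * `|b - p|.
Proof.
move=> fp b; have h1 := Hf p b; rewrite fp in h1.
have h2 := ler_distD p b (f b).
have u0 : 0 <= `|b - p| by [].
have v0 : 0 <= `|b - f b| by [].
have w0 : 0 <= `|p - f b| by [].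
have h3 : (1 - a4) * `|b - f b| <= (1 - a4) * (`|b - p| + `|p - f b|).
  have a4' : 0 <= 1 - a4 by lra.
  apply: ler_wpM2l; [exact: a4'|exact: h2].
have h4 : (1 - a4) * `|b - p| <= `|b - p|.
  by apply: ler_piMl => //; lra.
have h5 : a5 * `|b - p| <= `|b - p|.
  by apply: ler_piMl => //; lra.
lra.
Qed.

Lemma det_uniq (R : realType) (X : completeNormedModType R) (f : X -> X) (a4 a5 : R) (ha4 : 0 <= a4) (ha5 : 0 <= a5) (hs : a4 + a5 < 1) (Hf : forall a b, `|f a - f b| <= a4 * `|a - f b| + a5 * `|b - f a|) (p : X) (q : X) : f p = p -> f q = q -> p = q.
Proof.
move=> fp fq; have := det_est ha4 ha5 hs Hf fp q; rewrite fq subrr normr0 mulr0.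
move=> h; apply/eqP; rewrite eq_sym -subr_eq0 -normr_eq0.
have : 0 < 1 - a4 - a5 by lra.
move=> h0; rewrite eq_le normr_ge0 andbT.
by rewrite -(pmulr_rle0 _ h0).
Qed.

Lemma det_exists (R : realType) (X : completeNormedModType R) (f : X -> X) (a4 a5 : R) (ha4 : 0 <= a4) (ha5 : 0 <= a5) (hs : a4 + a5 < 1) (Hf : forall a b, `|f a - f b| <= a4 * `|a - f b| + a5 * `|b - f a|)  : exists p, f p = p.
Proof.
pose y n := iter n f 0.
pose s := a4 + a5.
have step k : (2 - s) * `|y k.+2 - y k.+1| <= s * `|y k.+1 - y k|.
  have e1 : `|y k.+2 - y k.+1| <= a4 * `|y k.+1 - y k.+1| + a5 * `|y k - y k.+2|
    := Hf (y k.+1) (y k).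
  have e2 : `|y k.+1 - y k.+2| <= a4 * `|y k - y k.+2| + a5 * `|y k.+1 - y k.+1|
    := Hf (y k) (y k.+1).
  rewrite subrr normr0 mulr0 add0r in e1.
  rewrite subrr normr0 mulr0 addr0 in e2.
  have h := ler_distD (y k.+1) (y k) (y k.+2).
  rewrite (distrC (y k.+1) (y k.+2)) in e2 h.
  rewrite (distrC (y k) (y k.+1)) in h.
  have h1 : a4 * `|y k - y k.+2| + a5 * `|y k - y k.+2| <= s * (`|y k.+1 - y k| + `|y k.+2 - y k.+1|).
    by rewrite -mulrDl; apply: ler_wpM2l => //; rewrite /s addr_ge0.
  rewrite /s in h1 *; lra.
pose q := s / (2 - s).
have s2 : 0 < 2 - s by rewrite /s; lra.
have q0 : 0 <= q by rewrite /q divr_ge0 ?(ltW s2) // /s addr_ge0.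
have q1 : q < 1 by rewrite /q ltr_pdivrMr // mul1r /s; lra.
have geo k : `|y k.+1 - y k| <= `|y 1 - y 0| * q ^+ k.
  elim: k => [|k IH]; first by rewrite expr0 mulr1.
  rewrite exprS mulrCA.
  apply: (le_trans _ (ler_wpM2l q0 IH)).
  by rewrite /q mulrAC ler_pdivlMr // mulrC; exact: step.
have cy : cvgn y.
  have cs : cvgn (series (telescope y)).
    apply: normed_cvg.
    apply: (@series_le_cvg _ _ (geometric (`|y 1 - y 0|) q)).
    - move=> n; exact: normr_ge0.
    - move=> n; rewrite /geometric /=; apply: mulr_ge0 => //; exact: exprn_ge0.
    - move=> n /=; exact: geo.
    - by apply: is_cvg_geometric_series; rewrite ger0_norm.
  rewrite telescopeK in cs.
  have -> : y = (fun n => (y n - y 0) + y 0) by apply/funext => n; rewrite subrK.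
  by apply: is_cvgD => //; exact: is_cvg_cst.
exists (limn y).
set p := limn y.
have yp : y @ \oo --> p by exact: cy.
have key e : 0 < e -> (1 - a4) * `|p - f p| <= 2 * e.
  move=> e0; move/cvgrPdist_lt : yp => /(_ e e0) [N _ HN].
  have h0 := HN N (leqnn N); have h1 := HN N.+1 (leqnSn N).
  have e1 : `|y N.+1 - f p| <= a4 * `|y N - f p| + a5 * `|p - y N.+1| := Hf (y N) p.
  have t1 := ler_distD (y N.+1) p (f p).
  have t2 := ler_distD p (y N) (f p).
  rewrite (distrC (y N) p) in t2.
  have m1 : a4 * `|y N - f p| <= a4 * (`|p - y N| + `|p - f p|).
    by apply: ler_wpM2l.
  have m2 : a4 * `|p - y N| <= a4 * e.
    by apply: ler_wpM2l => //; exact: ltW.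
  have m3 : a5 * `|p - y N.+1| <= a5 * e.
    by apply: ler_wpM2l => //; exact: ltW.
  have m4 : a4 * e + a5 * e <= e.
    by rewrite -mulrDl ler_piMl //; [exact: ltW | exact: ltW].
  rewrite mulrBl mul1r; lra.
apply/eqP; rewrite eq_sym -subr_eq0 -normr_eq0.
rewrite eq_le normr_ge0 andbT leNgt; apply/negP => Dp.
have a4p : 0 < 1 - a4 by lra.
have K0 : 0 < (1 - a4) * `|p - f p| by exact: mulr_gt0.
have := key ((1 - a4) * `|p - f p| / 4) (divr_gt0 K0 _).
move: K0; set K := (1 - a4) * `|p - f p|; lra.
Qed.

Lemma cst_rv d (Omega : measurableType d) (X : topologicalType) (a : X) :
  X_random_variable (fun _ : Omega => a).
Proof.
move=> B _; have [Ba|nBa] := pselect (B a).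
  have -> : (fun _ : Omega => a) @^-1` B = setT by apply/seteqP; split.
  exact: measurableT.
have -> : (fun _ : Omega => a) @^-1` B = set0 by apply/seteqP; split.
exact: measurable0.
Qed.

Lemma open_rv d (Omega : measurableType d) (X : topologicalType) (p : Omega -> X) :
  (forall O, open O -> measurable (p @^-1` O)) -> X_random_variable p.
Proof.
move=> H B hB.
have sa : sigma_algebra setT [set B : set X | measurable (p @^-1` B)].
  split.
  - by rewrite /= preimage_set0; exact: measurable0.
  - by move=> A mA; rewrite /= setTD preimage_setC; exact: measurableC.
  - by move=> F mF; rewrite /= preimage_bigcup; exact: bigcupT_measurable.
exact: (smallest_sub sa H hB).
Qed.

Lemma norm_rv d (Omega : measurableType d) (R : realType) (X : normedModType R)
  (u : Omega -> X) (e : X) :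
  X_random_variable u -> measurable_fun setT (fun w => `|e - u w|).
Proof.
move=> hu; apply: (measurability _ (measurable_realfun.RGenOpens.measurableE R)).
move=> _ [_ [a [b ->]] <-]; rewrite setTI.
have -> : (fun w => `|e - u w|) @^-1` `]a, b[%classic =
    u @^-1` ((fun x => `|e - x|) @^-1` `]a, b[%classic) by [].
apply: hu; apply: sub_sigma_algebra.
have hc : continuous (fun x : X => `|e - x|).
  move=> x; apply: (@continuous_comp _ _ _ (fun y => e - y) (@Num.Def.normr _ X) x);
    last exact: norm_continuous.
  by apply: (@cvgB _ _ _ _ _ (fun=> e) id); [exact: cvg_cst | exact: cvg_id].
exact: (proj1 (continuousP _) hc _ (interval_open _ _)).
Qed.

Lemma dense_seq (R : realType) (X : normedModType R) :
  separable_space X -> exists e : nat -> X,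
    forall (x : X) (eps : R), 0 < eps -> exists j, `|e j - x| < eps.
Proof.
move=> [D [cD dD]].
have [g gs] := pcard_surjP cD.
exists g => x eps eps0.
have [z [bz Dz]] : ball x eps `&` D !=set0.
  apply: dD; last exact: ball_open.
  by exists x; exact: ballxx.
have [j _ gj] := gs z Dz.
exists j; rewrite gj distrC.
by move: bz; rewrite -ball_normE.
Qed.
Theorem corollary3p5 (R : realType) (X : completeNormedModType R)
  (d : measure_display) (Omega : measurableType d)
  (mu : probability Omega R) (T : Omega -> X -> X)
  (alpha4 alpha5 : Omega -> R) :
  separable_space X ->
  measure_is_complete mu ->
  continuous_random_mapping mu T ->
  measurable_fun setT alpha4 -> measurable_fun setT alpha5 ->
  (forall w, 0 <= alpha4 w) -> (forall w, 0 <= alpha5 w) ->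
  (forall w, alpha4 w + alpha5 w < 1) ->
  (forall (x1 x2 : Omega -> X), X_random_variable x1 -> X_random_variable x2 ->
     forall w,
       `|T w (x1 w) - T w (x2 w)| <=
         alpha4 w * `|x1 w - T w (x2 w)| + alpha5 w * `|x2 w - T w (x1 w)|) ->
  (exists x : Omega -> X, random_fixed_point mu T x) /\
  (forall x y : Omega -> X, random_fixed_point mu T x -> random_fixed_point mu T y ->
     measure_one mu (fun w => x w = y w)).
Proof.
move=> sepX compl [rvT _] m4 m5 h4 h5 hs H.
have Hw w a b : `|T w a - T w b| <=
    alpha4 w * `|a - T w b| + alpha5 w * `|b - T w a|.
  exact: (H (fun _ => a) (fun _ => b) (cst_rv _ a) (cst_rv _ b) w).
split.
  have /all_sig [p hp] : forall w, {x | T w x = x}.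
    by move=> w; apply: cid; exact: (det_exists (h4 w) (h5 w) (hs w) (Hw w)).
  exists p; split; last first.
    rewrite /measure_one; have -> : [set w | T w (p w) = p w] = setT by apply/seteqP; split=> // w _; exact: hp.
    split; [exact: measurableT | exact: probability_setT].
  apply: open_rv => O oO.
  have [e De] := dense_seq sepX.
  pose g j w := `|e j - T w (e j)|.
  pose M j r := [set w | (1 - alpha4 w) * g j w < r * (1 - alpha4 w - alpha5 w)].
  have mM j r : measurable (M j r).
    have mh : measurable_fun setT
        (fun w => r * (1 - alpha4 w - alpha5 w) - (1 - alpha4 w) * g j w).
      apply: measurable_realfun.measurable_funB.
      - apply: measurable_realfun.measurable_funM; first exact: measurable_cst.
        apply: measurable_realfun.measurable_funB => //.
        by apply: measurable_realfun.measurable_funB => //; exact: measurable_cst.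
      - apply: measurable_realfun.measurable_funM; last exact: norm_rv (rvT (e j)).
        by apply: measurable_realfun.measurable_funB => //; exact: measurable_cst.
    have -> : M j r = setT `&` (fun w => r * (1 - alpha4 w - alpha5 w)
                       - (1 - alpha4 w) * g j w) @^-1` `]0, +oo[%classic.
      apply/seteqP; split=> w /=.
        by move=> hw; split=> //; rewrite in_itv /= andbT subr_gt0.
      by move=> [_]; rewrite in_itv /= andbT subr_gt0.
    exact: mh measurableT _ (measurable_itv _).
  have -> : p @^-1` O = \bigcup_j \bigcup_(n in [set n : nat |
      ball (e j) n.+1%:R^-1 `<=` O]) M j n.+1%:R^-1.
    apply/seteqP; split.
    - move=> w Opw.
      have : nbhs (p w) O by apply: open_nbhs_nbhs; split.
      move=> /nbhs_ballP [eps /= eps0 hb].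
      have c0 : 0 < 1 - alpha4 w - alpha5 w by have := hs w; lra.
      have c1 : 1 - alpha4 w - alpha5 w <= 1 by have := h4 w; have := h5 w; lra.
      have eps2 : 0 < eps / 2 by exact: divr_gt0.
      have [N _ HN] := near_infty_natSinv_lt (PosNum eps2).
      have hr : N.+1%:R^-1 < eps / 2 := HN N (leqnn N).
      set r := N.+1%:R^-1 in hr *.
      have r0 : 0 < r by rewrite /r invr_gt0.
      set c := 1 - alpha4 w - alpha5 w in c0 c1.
      have rc : r * c <= r by rewrite ler_piMr // ltW.
      have rc0 : 0 < r * c / 2 by rewrite divr_gt0 // mulr_gt0.
      have [j hj] := De (p w) (r * c / 2) rc0.
      exists j => //; exists N.
        move=> z; rewrite -ball_normE /= => hz.
        apply: hb; rewrite -ball_normE /=.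
        have := ler_distD (e j) (p w) z.
        rewrite (distrC (p w) (e j)) -/r in hz *; lra.
      rewrite /M /g /=.
      have := det_est2 (h4 w) (h5 w) (hs w) (Hw w) (hp w) (e j).
      rewrite -/c -/r; lra.
    - move=> w [j _ [n /= hsub hM]]; apply: hsub.
      rewrite -ball_normE /=.
      have := det_est (h4 w) (h5 w) (hs w) (Hw w) (hp w) (e j).
      move: hM; rewrite /M /g /= => hM h.
      have c0 : 0 < 1 - alpha4 w - alpha5 w by have := hs w; lra.
      rewrite -(ltr_pM2l c0) [_ * n.+1%:R^-1]mulrC; exact: le_lt_trans h hM.
  apply: bigcupT_measurable => j; apply: bigcup_measurable => n _; exact: mM.
move=> x y [rvx [mA A1]] [rvy [mB B1]].
set A := [set w | T w (x w) = x w] in mA A1.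
set B := [set w | T w (y w) = y w] in mB B1.
set S := [set w | x w = y w].
have sub : ~` S `<=` ~` A `|` ~` B.
  move=> w nS; apply/not_andP => -[Aw Bw]; apply: nS.
  exact: (det_uniq (h4 w) (h5 w) (hs w) (Hw w) Aw Bw).
have mC : measurable (~` A `|` ~` B) by apply: measurableU; exact: measurableC.
have C0 : mu (~` A `|` ~` B) = 0%E.
  apply/eqP; rewrite eq_le measure_ge0 andbT.
  apply: (le_trans (measureU2 _ _ _)); try exact: measurableC.
  have eA : mu (~` A) = 0%E by rewrite (probability_setC mu mA) A1 subee.
  have eB : mu (~` B) = 0%E by rewrite (probability_setC mu mB) B1 subee.
  change ((mu (~` A) + mu (~` B) <= 0)%E).
  by rewrite eA eB adde0.
have negl : mu.-negligible (~` S) by exists (~` A `|` ~` B).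
have mS : measurable S by rewrite -(setCK S); apply: measurableC; exact: compl.
split => //.
have CS0 : mu (~` S) = 0%E.
  apply/eqP; rewrite eq_le measure_ge0 andbT -C0.
  by apply: le_measure => //; rewrite inE //; exact: measurableC.
have hC := probability_setC mu mS.
rewrite CS0 in hC.
move: hC (probability_le1 mu mS) (measure_ge0 mu S).
rewrite /S; move: (mu _) => m.
case: m => [r| |] //= hC _ _.
move: hC; rewrite -EFinB => -[] h; congr (_%:E); lra.
Qed.
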